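(* There exist infinitely many terms of the Smarandache square-digital subsequence which are not of the form $N \times 10^{2k}$ with $k \in \mathbb{N}$ and $N$ a perfect square.
   Context: The Smarandache square-digital subsequence consists of those perfect squares $n^2$, $n \in \mathbb{N}_0 = \{0,1,2,\dots\}$, all of whose decimal digits belong to the set $\{0,1,4,9\}$ (i.e., every decimal digit is itself a perfect square). *)

(* Defs.v *)
From mathcomp Require Import all_boot.

Definition is_square (m : nat) : Prop := exists n : nat, m = n ^ 2.

(* The i-th decimal digit of m (i = 0 is the units digit); digits beyond the
   length of m are 0, which is itself a square digit, so harmless. *)
Definition dec_digit (m i : nat) : nat := (m %/ 10 ^ i) %% 10.

Definition square_digits (m : nat) : Prop :=
  forall i : nat, dec_digit m i \in [:: 0; 1; 4; 9].

Definition square_digital (m : nat) : Prop := is_square m /\ square_digits m.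

(* Main.v *)
Require Import Defs.
From mathcomp Require Import all_boot zify.

Lemma digit_split a b k i : b < 10 ^ k ->
  dec_digit (a * 10 ^ k + b) i = if i < k then dec_digit b i else dec_digit a (i - k).
Proof.
move=> hb; rewrite /dec_digit; case: ltnP => hik.
  have -> : 10 ^ k = 10 ^ (k - i) * 10 ^ i by rewrite -expnD subnK // ltnW.
  rewrite mulnA divnMDl ?expn_gt0 //.
  have : 0 < k - i by rewrite subn_gt0.
  case E: (k - i) => [|j] // _.
  by rewrite expnS -modnDml mulnCA modnMr add0n.
have -> : 10 ^ i = 10 ^ k * 10 ^ (i - k) by rewrite -expnD subnKC.
by rewrite divnMA divnMDl ?expn_gt0 // (divn_small hb) addn0.
Qed.

Lemma digit_small c i : c < 10 ^ i -> dec_digit c i = 0.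
Proof. by move=> h; rewrite /dec_digit divn_small. Qed.

Lemma digit_small2 c i : c < 100 -> dec_digit c i.+2 = 0.
Proof.
move=> h; apply: digit_small; rewrite !expnS.
have := expn_gt0 10 i; move: h; set X := 10 ^ i; nia.
Qed.

Theorem theorem1 :
  forall B : nat, exists m : nat,
    B < m /\ square_digital m /\
    ~ (exists N k : nat, 0 < k /\ is_square N /\ m = N * 10 ^ (2 * k)).
Proof.
move=> B; set n := B.+2.
have hn : 100 <= 10 ^ n.
  by rewrite /n !expnS mulnA; rewrite -[100]muln1 leq_mul // expn_gt0.
have hBn : B < 10 ^ n.
  by apply: leq_trans (ltn_expl _ (isT : 1 < 10)) _; rewrite /n leq_exp2l // leqW.
have Em : (10 ^ n + 7) ^ 2 = (1 * 10 ^ n + 14) * 10 ^ n + 49.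
  by rewrite mul1n -mulnn; set X := 10 ^ n; nia.
exists ((10 ^ n + 7) ^ 2); split; [|split; [split|]].
- by rewrite -mulnn; move: hBn; set X := 10 ^ n; nia.
- by exists (10 ^ n + 7).
- move=> i; rewrite Em digit_split; last by apply: leq_trans hn.
  case: ltnP => h1.
    case: i h1 => [|[|i]] h1 //.
    by rewrite digit_small2.
  rewrite digit_split; last by apply: leq_trans hn.
  case: ltnP => h2.
    case E: (i - n) => [|[|j]] //.
    by rewrite digit_small2.
  case E: (i - n - n) => [|j]; first by [].
  by rewrite digit_small // expnS; apply: leq_trans (leq_pmulr _ _); rewrite ?expn_gt0.
- case=> N [k [hk [_ E]]].
  have : odd ((10 ^ n + 7) ^ 2) by rewrite oddX oddD oddX.
  rewrite E oddM oddX; case: k hk E => // k _ _; by rewrite mulnS andbF.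
Qed.
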